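(* Let $\mathcal{H}_c=\mathcal{H}_{c'}=\ell^2(\mathbb{Z})$ with orthonormal bases $(|\tau\rangle_c)_{\tau\in\mathbb{Z}}$, $(|\tau\rangle_{c'})_{\tau\in\mathbb{Z}}$ and bilateral shifts $U_c|\tau\rangle_c=|\tau+1\rangle_c$, $U_{c'}|\tau\rangle_{c'}=|\tau+1\rangle_{c'}$. Let $\mathcal{H}_r$, $\mathcal{H}_{r'}$ be separable Hilbert spaces with $\dim\mathcal{H}_r=\dim\mathcal{H}_{r'}$ and unitaries $U_r$, $U_{r'}$ on them; set $U=U_c\otimes U_r$, $U'=U_{c'}\otimes U_{r'}$. For any unit vectors $|\psi(0)\rangle_r\in\mathcal{H}_r$, $|\psi'(0)\rangle_{r'}\in\mathcal{H}_{r'}$, with $|\Psi(\tau)\rangle=U^\tau|0\rangle_c|\psi(0)\rangle_r=|\tau\rangle_c U_r^\tau|\psi(0)\rangle_r$ and $|\Psi'(\tau)\rangle=U'^\tau|0\rangle_{c'}|\psi'(0)\rangle_{r'}$, there exists a unitary operator $S:\mathcal{H}_c\otimes\mathcal{H}_r\to\mathcal{H}_{c'}\otimes\mathcal{H}_{r'}$ such that $|\Psi'(\tau)\rangle=S|\Psi(\tau)\rangle$ for all $\tau\in\mathbb{Z}$ and $U'=SUS^{-1}$.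
   Context: This is the infinite discrete-time Page-Wootters setting: a clock with time values $\tau\in\mathbb{Z}$ whose one-step evolution is the bilateral shift, and a ''rest of the world'' with one-step unitary evolution $U_r$. *)

(* Defs.v *)
From HB Require Import structures.
From mathcomp Require Import all_boot all_order all_algebra.
From mathcomp Require Import complex.
From mathcomp Require Import all_classical all_reals all_analysis.
Set Implicit Arguments. Unset Strict Implicit. Unset Printing Implicit Defensive.
Import Order.TTheory GRing.Theory Num.Theory.
Local Open Scope ring_scope.

Definition pw_sqmod (R : realType) (z : R[i]) : R := (complex.Re z) ^+ 2 + (complex.Im z) ^+ 2.

Definition pw_sqnorm (R : realType) (T : countType) (f : T -> R[i]) : \bar R :=
  (\esum_(x in [set: T]) (pw_sqmod (f x))%:E)%E.

Definition pw_l2 (R : realType) (T : countType) (f : T -> R[i]) : Prop :=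
  (pw_sqnorm f < +oo)%E.

(* S is a unitary operator l^2(T) -> l^2(T'): a linear, norm-preserving,
   surjective map of l^2(T) onto l^2(T') (values outside l^2 are irrelevant). *)
Definition pw_unitary (R : realType) (T T' : countType)
    (S : (T -> R[i]) -> (T' -> R[i])) : Prop :=
  [/\ forall f, pw_l2 f -> pw_l2 (S f),
      forall (a : R[i]) f g, pw_l2 f -> pw_l2 g ->
        S (fun x => a * f x + g x) = (fun y => a * S f y + S g y),
      forall f, pw_l2 f -> pw_sqnorm (S f) = pw_sqnorm f
    & forall g, pw_l2 g -> exists2 f, pw_l2 f & S f = g].

(* l^2(Z) (x) l^2(I) is identified with l^2(Z * I); |tau>_c (x) |phi> is
   (t, i) |-> [t == tau] phi i. *)
Definition pw_ket (R : realType) (I : countType) (tau : int) (phi : I -> R[i])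
  : int * I -> R[i] :=
  fun p => if p.1 == tau then phi p.2 else 0.

(* U_c (x) U_r where U_c is the bilateral shift |tau> |-> |tau+1>:
   (U F)(t, i) = (U_r F(t-1, .))(i). *)
Definition pw_shift_tensor (R : realType) (I : countType)
    (Ur : (I -> R[i]) -> (I -> R[i])) (F : int * I -> R[i]) : int * I -> R[i] :=
  fun p => Ur (fun i => F (p.1 - 1, i)) p.2.

Definition pw_orbit (R : realType) (T : countType)
    (U : (T -> R[i]) -> (T -> R[i])) (v : T -> R[i]) (Psi : int -> T -> R[i]) : Prop :=
  Psi 0 = v /\ forall t : int, pw_l2 (Psi t) /\ Psi (t + 1) = U (Psi t).

(* Main.v *)
Require Import Defs.
From HB Require Import structures.
From mathcomp Require Import all_boot all_order all_algebra.
From mathcomp Require Import complex.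
From mathcomp Require Import all_classical all_reals all_analysis.
From mathcomp.algebra_tactics Require Import ring lra.
From mathcomp Require Import zify.
Import Order.TTheory GRing.Theory Num.Theory.
Local Open Scope ring_scope.


Section RS.
Context {R : realType} {T : choiceType}.
Implicit Types (f g a b : T -> R).

Definition es f : \bar R := (\esum_(x in [set: T]) (f x)%:E)%E.
Definition smb f := (es (fun x => `|f x|%R) < +oo)%E.
Definition rs f := fine (es (fun x => `|f x| + f x)) - fine (es (fun x => `|f x|)).

Lemma es_ge0 f : (forall x, 0 <= f x) -> (0 <= es f)%E.
Proof. by move=> h; apply: esum_ge0 => x _; rewrite lee_fin. Qed.

Lemma es_le f g : (forall x, f x <= g x) -> (es f <= es g)%E.
Proof. by move=> h; apply: le_esum => x _; rewrite lee_fin. Qed.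

Lemma es_ext f g : (forall x, f x = g x) -> es f = es g.
Proof. by move=> h; apply: eq_esum => x _; rewrite h. Qed.

Lemma es_fin f : (forall x, 0 <= f x) -> (es f < +oo)%E -> es f = (fine (es f))%:E.
Proof. by move=> h0 h; rewrite fineK // ge0_fin_numE // es_ge0. Qed.
Arguments es_fin {f}.

Lemma esD f g : (forall x, 0 <= f x) -> (forall x, 0 <= g x) ->
  es (fun x => f x + g x) = (es f + es g)%E.
Proof.
move=> hf hg; rewrite /es -esumD => [|x _|x _]; rewrite ?lee_fin //.
Qed.

Lemma es0 : es (fun=> 0) = 0%E.
Proof. by rewrite /es esum1. Qed.

Lemma esZ (k : R) f : 0 <= k -> (forall x, 0 <= f x) ->
  es (fun x => k * f x) = (k%:E * es f)%E.
Proof.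
move=> hk hf; rewrite /es /esum -ereal_supZl //; last first.
  by apply/set0P; exists 0%E; exists set0; [exact: fsets_set0|rewrite fsbig_set0].
congr ereal_sup; apply/seteqP; split => y [X HX <-].
  exists (\sum_(x \in X) (f x)%:E)%E; first by exists X.
  case: HX => HX _; rewrite !fsumEFin // -EFinM; congr (_%:E).
  by rewrite !fsbig_finite //= big_distrr.
case: HX => Y HY <-; exists Y => //.
case: HY => HY _; rewrite !fsumEFin // -EFinM; congr (_%:E).
by rewrite !fsbig_finite //= big_distrr.
Qed.


Lemma absp0 (y : R) : 0 <= `|y| + y.
Proof. by have := ler_norm (- y); rewrite normrN; lra. Qed.

Lemma smb_ext f g : (forall x, f x = g x) -> smb f -> smb g.
Proof. by move=> h; rewrite /smb (@es_ext (fun x => `|f x|) (fun x => `|g x|)) // => x; rewrite h. Qed.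

Lemma smb_ge0 f : (forall x, 0 <= f x) -> smb f <-> (es f < +oo)%E.
Proof.
by move=> h; rewrite /smb (@es_ext (fun x => `|f x|) f) // => x; rewrite ger0_norm.
Qed.
Arguments smb_ge0 {f}.

Lemma smb_le f g : (forall x, `|f x| <= g x) -> smb g -> smb f.
Proof.
move=> h; rewrite /smb; apply: le_lt_trans; apply: es_le => x.
exact: le_trans (h x) (ler_norm (g x)).
Qed.

Lemma smb_norm f : smb f -> smb (fun x => `|f x|).
Proof. by move=> sf; rewrite /smb (@es_ext _ (fun x => `|f x|)) // => x; rewrite normr_id. Qed.
Arguments smb_norm {f}.

Lemma smbD f g : smb f -> smb g -> smb (fun x => f x + g x).
Proof.
move=> hf hg; apply: (@smb_le _ (fun x => `|f x| + `|g x|)) => [x|]; first exact: ler_normD.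
apply/smb_ge0 => [x|]; first by rewrite addr_ge0.
by rewrite esD // lte_add_pinfty.
Qed.
Arguments smbD {f g}.

Lemma smbZ k f : smb f -> smb (fun x => k * f x).
Proof.
rewrite /smb => hf; rewrite (@es_ext _ (fun x => `|k| * `|f x|)); last by move=> x; rewrite normrM.
rewrite esZ // lte_mul_pinfty //.
Qed.
Arguments smbZ k {f}.

Lemma rs_ge0E f : (forall x, 0 <= f x) -> smb f -> es f = (rs f)%:E.
Proof.
move=> h0 /smb_ge0 - /(_ h0) hf; have E := es_fin h0 hf.
rewrite /rs (@es_ext (fun x => `|f x| + f x) (fun x => f x + f x)); last by move=> x; rewrite ger0_norm.
rewrite (@es_ext (fun x => `|f x|) f); last by move=> x; rewrite ger0_norm.
by rewrite esD // E -EFinD /= addrK.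
Qed.
Arguments rs_ge0E {f}.

Lemma rs_ext f g : (forall x, f x = g x) -> rs f = rs g.
Proof. by move=> h; have -> : f = g by apply: funext. Qed.

Lemma rs_decomp f a b : (forall x, 0 <= a x) -> (forall x, 0 <= b x) ->
  smb a -> smb b -> (forall x, f x = a x - b x) -> rs f = rs a - rs b.
Proof.
move=> a0 b0 sa sb hf.
have sf : smb f.
  apply: (@smb_ext (fun x => a x + (-1) * b x)); first by move=> x; rewrite hf mulN1r.
  by apply: smbD => //; apply: smbZ.
have p0 : forall x, 0 <= `|f x| + f x.
  by move=> x; have := ler_norm (- f x); rewrite normrN; lra.
have n0 : forall x, 0 <= `|f x| by move=> x.
have sp : smb (fun x => `|f x| + f x) by apply: smbD => //; apply: smb_norm.
have sn : smb (fun x => `|f x|) by apply: smb_norm.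
have key : (es (fun x => (`|f x| + f x)%R) + es b = es (fun x => `|f x|%R) + es a)%E.
  rewrite -!esD //; apply: es_ext => x; rewrite hf; ring.
move: key; rewrite (rs_ge0E b0 sb) (rs_ge0E a0 sa).
rewrite (es_fin p0 (proj1 (smb_ge0 p0) sp)) (es_fin n0 (proj1 (smb_ge0 n0) sn)).
rewrite -!EFinD => -[] key; rewrite [rs f]/rs; lra.
Qed.

Lemma rs_addpos a b : (forall x, 0 <= a x) -> (forall x, 0 <= b x) ->
  smb a -> smb b -> rs (fun x => a x + b x) = rs a + rs b.
Proof.
move=> a0 b0 sa sb.
have s0 : forall x, 0 <= a x + b x by move=> x; rewrite addr_ge0.
have := rs_ge0E s0 (smbD sa sb); rewrite esD // (rs_ge0E a0 sa) (rs_ge0E b0 sb).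
by rewrite -EFinD => -[].
Qed.

Lemma rs_scalepos k a : 0 <= k -> (forall x, 0 <= a x) -> smb a ->
  rs (fun x => k * a x) = k * rs a.
Proof.
move=> k0 a0 sa.
have s0 : forall x, 0 <= k * a x by move=> x; rewrite mulr_ge0.
have := rs_ge0E s0 (smbZ k sa); rewrite esZ // (rs_ge0E a0 sa).
by rewrite -EFinM => -[].
Qed.

Lemma rs_split f : smb f -> rs f = rs (fun x => `|f x| + f x) - rs (fun x => `|f x|).
Proof.
move=> sf; apply: rs_decomp => //.
- by move=> x; apply: absp0.
- by apply: smbD => //; apply: smb_norm.
- by apply: smb_norm.
- by move=> x; ring.
Qed.
Arguments rs_split {f}.

Lemma rs_add f g : smb f -> smb g -> rs (fun x => f x + g x) = rs f + rs g.
Proof.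
move=> sf sg.
have p0 : forall h : T -> R, forall x, 0 <= `|h x| + h x.
  by move=> h x; have := ler_norm (- h x); rewrite normrN; lra.
have sp : forall h, smb h -> smb (fun x => `|h x| + h x).
  by move=> h sh; apply: smbD => //; apply: smb_norm.
rewrite (rs_split sf) (rs_split sg).
rewrite (@rs_decomp _ (fun x => (`|f x| + f x) + (`|g x| + g x)) (fun x => `|f x| + `|g x|)).
- rewrite (@rs_addpos (fun x => `|f x| + f x) (fun x => `|g x| + g x)) ?sp //.
  rewrite (@rs_addpos (fun x => `|f x|) (fun x => `|g x|)) ?smb_norm //; ring.
- by move=> x; rewrite addr_ge0.
- by move=> x; rewrite addr_ge0.
- by apply: smbD; apply: sp.
- by apply: smbD; apply: smb_norm.
- by move=> x; ring.
Qed.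

Lemma rs_scale k f : smb f -> rs (fun x => k * f x) = k * rs f.
Proof.
move=> sf; rewrite (rs_split sf).
have p0 : forall x, 0 <= `|f x| + f x.
  by move=> x; have := ler_norm (- f x); rewrite normrN; lra.
have sp : smb (fun x => `|f x| + f x) by apply: smbD => //; apply: smb_norm.
have sn : smb (fun x => `|f x|) by apply: smb_norm.
have [k0|k0] := leP 0 k.
  rewrite (@rs_decomp _ (fun x => k * (`|f x| + f x)) (fun x => k * `|f x|)).
  - by rewrite !rs_scalepos //; ring.
  - by move=> x; rewrite mulr_ge0.
  - by move=> x; rewrite mulr_ge0.
  - exact: smbZ.
  - exact: smbZ.
  - by move=> x; ring.
have k0' : 0 <= - k by rewrite oppr_ge0 ltW.
rewrite (@rs_decomp _ (fun x => - k * `|f x|) (fun x => - k * (`|f x| + f x))).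
- by rewrite !rs_scalepos //; ring.
- by move=> x; rewrite mulr_ge0.
- by move=> x; rewrite mulr_ge0.
- exact: smbZ.
- exact: smbZ.
- by move=> x; ring.
Qed.


Lemma smb_comb a k b : smb a -> smb b -> smb (fun x => a x + k * b x).
Proof. by move=> sa sb; apply: smbD => //; apply: smbZ. Qed.

Lemma rs_comb a k b : smb a -> smb b -> rs (fun x => a x + k * b x) = rs a + k * rs b.
Proof. by move=> sa sb; rewrite rs_add ?rs_scale //; apply: smbZ. Qed.

Lemma smb0 : smb (fun=> 0).
Proof. by rewrite /smb (@es_ext (fun=> `|0|) (fun=> 0)) ?normr0 // es0 ltry. Qed.

Lemma rs0 : rs (fun=> 0) = 0.
Proof. by have := @rs_ge0E (fun=> 0) (fun=> lexx 0) smb0; rewrite es0 => -[]. Qed.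

End RS.
Arguments es_fin {R T} {f}.
Arguments smb_ge0 {R T} {f}.
Arguments smb_norm {R T} {f}.
Arguments smbD {R T} {f g}.
Arguments smbZ {R T} k {f}.
Arguments rs_ge0E {R T} {f}.
Arguments rs_split {R T} {f}.


Section Cplx.
Context {R : realType}.
Local Notation C := (R[i]).
Local Notation re := (@complex.Re R).
Local Notation im := (@complex.Im R).

Lemma cplx_ext (x y : C) : re x = re y -> im x = im y -> x = y.
Proof. by case: x => a b; case: y => c d /= -> ->. Qed.

Lemma ReM (x y : C) : re (x * y) = re x * re y - im x * im y.
Proof. by case: x => a b; case: y => c d. Qed.
Lemma ImM (x y : C) : im (x * y) = re x * im y + im x * re y.
Proof. by case: x => a b; case: y => c d. Qed.
Lemma ReD (x y : C) : re (x + y) = re x + re y.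
Proof. by case: x => a b; case: y => c d. Qed.
Lemma ImD (x y : C) : im (x + y) = im x + im y.
Proof. by case: x => a b; case: y => c d. Qed.
Lemma ReN (x : C) : re (- x) = - re x.
Proof. by case: x => a b. Qed.
Lemma ImN (x : C) : im (- x) = - im x.
Proof. by case: x => a b. Qed.
Lemma ReB (x y : C) : re (x - y) = re x - re y.
Proof. by rewrite ReD ReN. Qed.
Lemma ImB (x y : C) : im (x - y) = im x - im y.
Proof. by rewrite ImD ImN. Qed.
Lemma Re0 : re 0 = 0. Proof. by []. Qed.
Lemma Im0 : im 0 = 0. Proof. by []. Qed.
Lemma Re1 : re 1 = 1. Proof. by []. Qed.
Lemma Im1 : im 1 = 0. Proof. by []. Qed.
Lemma ReC (a b : R) : re (a +i* b)%C = a. Proof. by []. Qed.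
Lemma ImC (a b : R) : im (a +i* b)%C = b. Proof. by []. Qed.

Definition cE := (ReM, ImM, ReB, ImB, ReD, ImD, ReN, ImN, Re0, Im0, Re1, Im1, ReC, ImC).

Lemma sqmE (z : C) : pw_sqmod z = re z ^+ 2 + im z ^+ 2.
Proof. by []. Qed.

Lemma sqm_ge0 (z : C) : 0 <= pw_sqmod z.
Proof. by rewrite sqmE addr_ge0 // sqr_ge0. Qed.

Lemma sqm_eq0 (z : C) : pw_sqmod z = 0 -> z = 0.
Proof.
rewrite sqmE => h; have h1 : re z ^+ 2 = 0.
  apply/eqP; rewrite eq_le sqr_ge0 andbT -h lerDl sqr_ge0 //.
have h2 : im z ^+ 2 = 0 by move: h; rewrite h1 add0r.
by apply: cplx_ext; apply/eqP; rewrite -sqrf_eq0 ?h1 ?h2.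
Qed.

Lemma sqmM (a z : C) : pw_sqmod (a * z) = pw_sqmod a * pw_sqmod z.
Proof. rewrite !sqmE !cE; ring. Qed.

Section L2.
Context {T : countType}.
Implicit Types (f g w : T -> C).

Definition nrm f := rs (fun i => pw_sqmod (f i)).
Definition pr f g i := re (f i) * re (g i) + im (f i) * im (g i).
Definition pi f g i := re (f i) * im (g i) - im (f i) * re (g i).
Definition ipr f g := rs (pr f g).
Definition ipi f g := rs (pi f g).

Lemma l2_smb f : pw_l2 f <-> smb (fun i => pw_sqmod (f i)).
Proof. by rewrite smb_ge0 //; move=> x; apply: sqm_ge0. Qed.

Lemma sqnormE f : pw_l2 f -> pw_sqnorm f = (nrm f)%:E.
Proof.
move=> /l2_smb h; have h0 : forall x, 0 <= pw_sqmod (f x) by move=> x; apply: sqm_ge0.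
exact: (rs_ge0E h0 h).
Qed.

Lemma l2_lin (a : C) f g : pw_l2 f -> pw_l2 g -> pw_l2 (fun i => a * f i + g i).
Proof.
move=> /l2_smb hf /l2_smb hg; apply/l2_smb.
apply: (@smb_le _ _ _ (fun i => (2 * pw_sqmod a) * pw_sqmod (f i) + 2 * pw_sqmod (g i))).
  move=> i; rewrite ger0_norm ?sqm_ge0 //.
  rewrite !sqmE !cE.
  set ar := re a; set ai := im a; set fr := re (f i); set fi := im (f i).
  set gr := re (g i); set gi := im (g i).
  have E : (ar ^+ 2 + ai ^+ 2) * (fr ^+ 2 + fi ^+ 2) =
    (ar * fr - ai * fi) ^+ 2 + (ar * fi + ai * fr) ^+ 2 by ring.
  have := sqr_ge0 (ar * fr - ai * fi - gr); have := sqr_ge0 (ar * fi + ai * fr - gi).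
  rewrite -mulrA E. nra.
by apply: smbD; apply: smbZ.
Qed.

Lemma l2_0 : pw_l2 (fun _ : T => (0 : C)).
Proof.
apply/l2_smb; rewrite smb_ge0 => [|x]; last exact: sqm_ge0.
rewrite (@es_ext _ _ _ (fun=> 0)) ?es0 ?ltry //.
by move=> x; rewrite sqmE Re0 Im0 expr0n /= addr0.
Qed.

Lemma es_single (h : T -> R) x : (forall y, 0 <= h y) -> ((h x)%:E <= es h)%E.
Proof.
move=> h0; apply: esum_ge; exists [set x]%classic; first by split => //; exact: finite_set1.
by rewrite fsbig_set1.
Qed.

Lemma sqnorm0 f : pw_sqnorm f = 0%E -> f = (fun=> 0).
Proof.
move=> h; apply: funext => x; apply: sqm_eq0; apply/eqP; rewrite eq_le sqm_ge0 andbT.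
have H := @es_single (fun i => pw_sqmod (f i)) x (fun y => sqm_ge0 (f y)).
move: H; rewrite [X in (_ <= X)%E -> _](_ : _ = 0%E) //.
Qed.

Lemma smb_pr f g : pw_l2 f -> pw_l2 g -> smb (pr f g).
Proof.
move=> /l2_smb hf /l2_smb hg.
apply: (@smb_le _ _ _ (fun i => pw_sqmod (f i) + pw_sqmod (g i))); last exact: smbD.
move=> i; rewrite /pr !sqmE ler_norml.
have := sqr_ge0 (re (f i) + re (g i)); have := sqr_ge0 (re (f i) - re (g i)).
have := sqr_ge0 (im (f i) + im (g i)); have := sqr_ge0 (im (f i) - im (g i)).
move=> *; apply/andP; split; nra.
Qed.

Lemma smb_pi f g : pw_l2 f -> pw_l2 g -> smb (pi f g).
Proof.
move=> /l2_smb hf /l2_smb hg.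
apply: (@smb_le _ _ _ (fun i => pw_sqmod (f i) + pw_sqmod (g i))); last exact: smbD.
move=> i; rewrite /pi !sqmE ler_norml.
have := sqr_ge0 (re (f i) + im (g i)); have := sqr_ge0 (re (f i) - im (g i)).
have := sqr_ge0 (im (f i) + re (g i)); have := sqr_ge0 (im (f i) - re (g i)).
move=> *; apply/andP; split; nra.
Qed.


Lemma smb_sq f : pw_l2 f -> smb (fun i => pw_sqmod (f i)).
Proof. by move/l2_smb. Qed.

Lemma expand x w c : pw_l2 x -> pw_l2 w ->
  pw_sqnorm (fun i => x i - c * w i) =
  (nrm x - 2 * (re c * ipr w x + im c * ipi w x) + pw_sqmod c * nrm w)%:E.
Proof.
move=> hx hw.
pose hf := fun i => ((pw_sqmod (x i) + (-2 * re c) * pr w x i) + (-2 * im c) * pi w x i)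
   + pw_sqmod c * pw_sqmod (w i).
have E : forall i, pw_sqmod (x i - c * w i) = hf i.
  by move=> i; rewrite /hf /pr /pi !sqmE !cE; ring.
have h0 : forall i, 0 <= hf i by move=> i; rewrite -E sqm_ge0.
have sh : smb hf.
  by apply: smb_comb; [apply: smb_comb; [apply: smb_comb|]|]; 
    rewrite ?smb_sq ?smb_pr ?smb_pi.
have -> : pw_sqnorm (fun i => x i - c * w i) = es (fun i => pw_sqmod (x i - c * w i)) by [].
rewrite (@es_ext _ _ _ hf E) (rs_ge0E h0 sh); congr (_%:E).
rewrite /hf rs_comb; last 2 first.
- by apply: smb_comb; [apply: smb_comb|]; rewrite ?smb_sq ?smb_pr ?smb_pi.
- by rewrite smb_sq.
rewrite rs_comb; last 2 first.
- by apply: smb_comb; rewrite ?smb_sq ?smb_pr ?smb_pi.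
- by rewrite smb_pi.
rewrite rs_comb ?smb_sq ?smb_pr //.
rewrite /nrm /ipr /ipi; ring.
Qed.


Lemma ipr_lin w a f g : pw_l2 w -> pw_l2 f -> pw_l2 g ->
  ipr w (fun i => a * f i + g i) = re a * ipr w f - im a * ipi w f + ipr w g.
Proof.
move=> hw hf hg; rewrite /ipr (@rs_ext _ _ _ (fun i => (pr w g i + re a * pr w f i) + (- im a) * pi w f i)).
  rewrite rs_comb ?rs_comb ?smb_comb ?smb_pr ?smb_pi // /ipr /ipi; ring.
by move=> i; rewrite /pr /pi !cE; ring.
Qed.

Lemma ipi_lin w a f g : pw_l2 w -> pw_l2 f -> pw_l2 g ->
  ipi w (fun i => a * f i + g i) = re a * ipi w f + im a * ipr w f + ipi w g.
Proof.
move=> hw hf hg; rewrite /ipi (@rs_ext _ _ _ (fun i => (pi w g i + re a * pi w f i) + im a * pr w f i)).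
  rewrite rs_comb ?rs_comb ?smb_comb ?smb_pr ?smb_pi // /ipr /ipi; ring.
by move=> i; rewrite /pr /pi !cE; ring.
Qed.

Lemma ipr_self w : ipr w w = nrm w.
Proof. by apply: rs_ext => i; rewrite /pr sqmE; ring. Qed.

Lemma ipi_self w : ipi w w = 0.
Proof. by rewrite /ipi (@rs_ext _ _ _ (fun=> 0)) ?rs0 // => i; rewrite /pi; ring. Qed.

Definition hk w := 2 / nrm w.
Definition hc w x : C := ((hk w * ipr w x) +i* (hk w * ipi w x))%C.
Definition hh w x : T -> C := fun i => x i - hc w x * w i.

Lemma hh_norm w x : pw_l2 w -> pw_l2 x -> pw_sqnorm (hh w x) = pw_sqnorm x.
Proof.
move=> hw hx; rewrite /hh expand // (sqnormE _ hx); congr (_%:E).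
rewrite sqmE /hc !cE /hk.
have [->|nz] := eqVneq (nrm w) 0; first by rewrite invr0 !mulr0 !mul0r; ring.
by field.
Qed.

Lemma hh_l2 w x : pw_l2 w -> pw_l2 x -> pw_l2 (hh w x).
Proof. by move=> hw hx; rewrite /pw_l2 hh_norm. Qed.

Lemma hh_lin w a f g : pw_l2 w -> pw_l2 f -> pw_l2 g ->
  hh w (fun i => a * f i + g i) = (fun i => a * hh w f i + hh w g i).
Proof.
move=> hw hf hg; apply: funext => i; apply: cplx_ext;
  rewrite /hh /hc ipr_lin // ipi_lin // !cE; ring.
Qed.

Lemma hh_id0 w x : nrm w = 0 -> hh w x = x.
Proof.
move=> h; apply: funext => i; apply: cplx_ext; rewrite /hh /hc /hk h invr0 mulr0 !mul0r !cE; ring.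
Qed.

Lemma hh_invol w x : pw_l2 w -> pw_l2 x -> hh w (hh w x) = x.
Proof.
move=> hw hx; have [h0|nz] := eqVneq (nrm w) 0; first by rewrite !hh_id0.
have E : hh w x = (fun i => (- hc w x) * w i + x i).
  by apply: funext => i; rewrite /hh mulNr addrC.
have Hr : ipr w (hh w x) = - ipr w x.
  by rewrite E ipr_lin // ipr_self ipi_self /hc !cE /hk; field.
have Hi : ipi w (hh w x) = - ipi w x.
  by rewrite E ipi_lin // ipr_self ipi_self /hc !cE /hk; field.
have Hc : hc w (hh w x) = - hc w x.
  by rewrite /hc Hr Hi; apply: cplx_ext; rewrite !cE; ring.
by apply: funext => i; rewrite {1}/hh Hc /hh mulNr opprK subrK.
Qed.

Lemma hh_unitary w : pw_l2 w -> pw_unitary (hh w).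
Proof.
move=> hw; split.
- by move=> f hf; apply: hh_l2.
- by move=> a f g hf hg; apply: hh_lin.
- by move=> f hf; apply: hh_norm.
- by move=> g hg; exists (hh w g); [apply: hh_l2 | apply: hh_invol].
Qed.

End L2.
End Cplx.
Arguments l2_lin {R T} a {f g}.
Arguments sqnorm0 {R T f}.


Section Unitary.
Context {R : realType}.
Local Notation C := (R[i]).
Local Notation re := (@complex.Re R).
Local Notation im := (@complex.Im R).

Lemma sqnorm_0 (T : countType) : pw_sqnorm (fun _ : T => (0 : C)) = 0%E.
Proof.
rewrite -[LHS]/(es (fun _ : T => pw_sqmod (0 : C))) -(@es0 R T).
by apply: es_ext => x; rewrite sqmE Re0 Im0 expr0n /= addr0.
Qed.

Section U2.
Context {T1 T2 : countType} {V : (T1 -> C) -> (T2 -> C)}.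
Hypothesis hV : pw_unitary V.

Lemma u_l2 f : pw_l2 f -> pw_l2 (V f).
Proof. by case: hV => h _ _ _; apply: h. Qed.
Arguments u_l2 {f}.

Lemma u_lin a f g : pw_l2 f -> pw_l2 g ->
  V (fun x => a * f x + g x) = (fun y => a * V f y + V g y).
Proof. by case: hV => _ h _ _; apply: h. Qed.
Arguments u_lin a {f g}.

Lemma u_norm f : pw_l2 f -> pw_sqnorm (V f) = pw_sqnorm f.
Proof. by case: hV => _ _ h _; apply: h. Qed.
Arguments u_norm {f}.

Lemma u_0 : V (fun=> 0) = (fun=> 0).
Proof.
have E : (fun x : T1 => (-1 : C) * 0 + 0) = (fun=> 0) by apply: funext => x; rewrite mulr0 addr0.
have := u_lin (-1) (@l2_0 R T1) (@l2_0 R T1); rewrite E => ->.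
by apply: funext => y; rewrite mulN1r addNr.
Qed.

Lemma u_inj f g : pw_l2 f -> pw_l2 g -> V f = V g -> f = g.
Proof.
move=> hf hg e.
have h1 := u_lin (-1) hg hf; rewrite e in h1.
have h2 : (fun y => (-1 : C) * V g y + V g y) = (fun=> 0).
  by apply: funext => y; rewrite mulN1r addNr.
rewrite h2 in h1.
have hl := l2_lin (-1) hg hf.
have := u_norm hl; rewrite h1 sqnorm_0 => /esym /sqnorm0 h3.
apply: funext => x; have := congr1 (fun F => F x) h3 => /= /eqP.
by rewrite mulN1r addrC subr_eq0 => /eqP.
Qed.
Arguments u_inj {f g}.

Definition uinv (g : T2 -> C) : T1 -> C :=
  match pselect (exists f, pw_l2 f /\ V f = g) with
  | left h => proj1_sig (cid h)
  | right _ => fun=> 0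
  end.

Lemma uinv_spec g : pw_l2 g -> pw_l2 (uinv g) /\ V (uinv g) = g.
Proof.
move=> hg; rewrite /uinv; case: pselect => [h|n]; first exact: proj2_sig (cid h).
by exfalso; apply: n; case: hV => _ _ _ /(_ g hg) [f hf <-]; exists f.
Qed.
Arguments uinv_spec {g}.

Lemma uinvK f : pw_l2 f -> uinv (V f) = f.
Proof.
move=> hf; have [h1 h2] := uinv_spec (u_l2 hf).
exact: u_inj h1 hf h2.
Qed.
Arguments uinvK {f}.

Lemma uinv_unitary : pw_unitary uinv.
Proof.
split.
- by move=> g hg; case: (uinv_spec hg).
- move=> a f g hf hg.
  have [hf1 hf2] := uinv_spec hf; have [hg1 hg2] := uinv_spec hg.
  have hl := l2_lin a hf hg; have [hl1 hl2] := uinv_spec hl.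
  apply: u_inj => //; first exact: l2_lin.
  by rewrite hl2 u_lin // hf2 hg2.
- move=> g hg; have [h1 h2] := uinv_spec hg.
  by rewrite -(u_norm h1) h2.
- by move=> f hf; exists (V f); [apply: u_l2 | apply: uinvK].
Qed.

End U2.
Arguments u_l2 {T1 T2 V} hV {f}.
Arguments u_lin {T1 T2 V} hV a {f g}.
Arguments u_norm {T1 T2 V} hV {f}.
Arguments u_inj {T1 T2 V} hV {f g}.
Arguments uinv_spec {T1 T2 V} hV {g}.
Arguments uinvK {T1 T2 V} hV {f}.
Arguments uinv {T1 T2} V g.
Arguments uinv_unitary {T1 T2 V} hV.


Lemma comp_unitary (T1 T2 T3 : countType) (V1 : (T1 -> C) -> (T2 -> C))
  (V2 : (T2 -> C) -> (T3 -> C)) :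
  pw_unitary V1 -> pw_unitary V2 -> pw_unitary (fun f => V2 (V1 f)).
Proof.
move=> h1 h2; split.
- by move=> f hf; apply: (u_l2 h2); apply: (u_l2 h1).
- move=> a f g hf hg; rewrite (u_lin h1) //.
  by rewrite (u_lin h2) //; apply: (u_l2 h1).
- by move=> f hf; rewrite (u_norm h2) ?(u_norm h1) //; apply: (u_l2 h1).
- move=> g hg; case: h2 => _ _ _ /(_ g hg) [f2 hf2 <-].
  case: h1 => _ _ _ /(_ f2 hf2) [f1 hf1 <-].
  by exists f1.
Qed.
Arguments comp_unitary {T1 T2 T3 V1 V2}.

Lemma id_unitary (T : countType) : pw_unitary (fun f : T -> C => f).
Proof. by split => // g hg; exists g. Qed.

Lemma iter_unitary (T : countType) (V : (T -> C) -> (T -> C)) n :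
  pw_unitary V -> pw_unitary (iter n V).
Proof.
move=> hV; elim: n => [|n IH]; first exact: id_unitary.
have -> : iter n.+1 V = (fun f => V (iter n V f)) by apply: funext => f; rewrite iterS.
exact: (comp_unitary IH hV).
Qed.

Definition cj (z : C) : C := ((re z) +i* (- im z))%C.

Lemma phase_unitary (T : countType) (mu : C) : pw_sqmod mu = 1 ->
  pw_unitary (fun (f : T -> C) i => mu * f i).
Proof.
move=> hm.
have hn' : forall nu (f : T -> C), pw_sqmod nu = 1 -> pw_sqnorm (fun i => nu * f i) = pw_sqnorm f.
  move=> nu f hnu; rewrite -[LHS]/(es (fun i => pw_sqmod (nu * f i))).
  by apply: es_ext => i; rewrite sqmM hnu mul1r.
have hn : forall f : T -> C, pw_sqnorm (fun i => mu * f i) = pw_sqnorm f by move=> f; apply: hn'.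
split.
- by move=> f hf; rewrite /pw_l2 hn.
- by move=> a f g hf hg; apply: funext => i; rewrite mulrDr mulrCA.
- by move=> f hf; rewrite hn.
- move=> g hg; exists (fun i => cj mu * g i); first by rewrite /pw_l2 hn' // -hm !sqmE /cj !cE sqrrN.
  apply: funext => i; rewrite mulrA (_ : mu * cj mu = 1) ?mul1r //.
  by apply: cplx_ext; move: hm; rewrite sqmE /cj !cE => hm; [rewrite -hm; ring | ring].
Qed.

Lemma transport_unitary (I J : countType) (e : I -> J) (g : J -> I) :
  cancel e g -> cancel g e ->
  pw_unitary (fun (f : I -> C) j => f (g j)).
Proof.
move=> ge eg.
have hn : forall f : I -> C, pw_sqnorm (fun j => f (g j)) = pw_sqnorm f.
  move=> f; rewrite /pw_sqnorm (@reindex_esum _ _ _ [set: I] [set: J] e).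
    by apply: eq_esum => i _; rewrite ge.
  by rewrite setTT_bijective; exists g.
split.
- by move=> f hf; rewrite /pw_l2 hn.
- by [].
- by move=> f hf; rewrite hn.
- move=> h hh; exists (fun i => h (e i)).
    by rewrite /pw_l2 -(hn (fun i => h (e i))) (_ : (fun j => h (e (g j))) = h) //; apply: funext => j; rewrite eg.
  by apply: funext => j; rewrite eg.
Qed.

End Unitary.
Arguments u_l2 {R T1 T2 V} hV {f}.
Arguments u_lin {R T1 T2 V} hV a {f g}.
Arguments u_norm {R T1 T2 V} hV {f}.
Arguments u_inj {R T1 T2 V} hV {f g}.
Arguments uinv_spec {R T1 T2 V} hV {g}.
Arguments uinvK {R T1 T2 V} hV {f}.
Arguments uinv {R T1 T2} V g.
Arguments uinv_unitary {R T1 T2 V} hV.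

Arguments comp_unitary {R T1 T2 T3 V1 V2}.


Section WCons.
Context {R : realType}.
Local Notation C := (R[i]).
Local Notation re := (@complex.Re R).
Local Notation im := (@complex.Im R).

Lemma ipr_sym (T : countType) (f g : T -> C) : ipr f g = ipr g f.
Proof. by apply: rs_ext => i; rewrite /pr; ring. Qed.

Lemma ipi_sym (T : countType) (f g : T -> C) : pw_l2 f -> pw_l2 g -> ipi f g = - ipi g f.
Proof.
move=> hf hg; rewrite /ipi (@rs_ext _ _ (pi f g) (fun i => -1 * pi g f i)).
  by rewrite rs_scale ?smb_pi // mulN1r.
by move=> i; rewrite /pi; ring.
Qed.

Lemma nrm_of (T : countType) (f : T -> C) (x : R) : pw_l2 f -> pw_sqnorm f = x%:E -> nrm f = x.
Proof. by move=> hf; rewrite (sqnormE _ hf) => -[]. Qed.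

Lemma exists_W (I J : countType) (u0 : I -> C) (v : J -> C) :
  (exists e : I -> J, bijective e) ->
  pw_l2 u0 -> pw_sqnorm u0 = 1%E -> pw_l2 v -> pw_sqnorm v = 1%E ->
  exists W : (I -> C) -> (J -> C), pw_unitary W /\ W u0 = v.
Proof.
move=> [e [g ge eg]] hu0 nu0 hv nv.
have hT := @transport_unitary R I J e g ge eg.
pose u := fun j => u0 (g j).
have hu : pw_l2 u := u_l2 hT hu0.
have nu : nrm u = 1 by apply: nrm_of => //; rewrite (u_norm hT hu0).
have nv' : nrm v = 1 by apply: nrm_of.
pose zr := ipr v u; pose zi := ipi v u.
pose r := Num.sqrt (zr ^+ 2 + zi ^+ 2).
pose lam : C := if r == 0 then 1 else ((zr / r) +i* (zi / r))%C.
have r0 : 0 <= r by apply: sqrtr_ge0.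
have [L1 [L2 L3]] : [/\ pw_sqmod lam = 1, re lam * zr + im lam * zi = r
                     & re lam * zi - im lam * zr = 0].
  rewrite /lam; have [rz|rnz] := eqVneq r 0.
    have hz : zr ^+ 2 + zi ^+ 2 <= 0 by rewrite -sqrtr_eq0 -/r rz.
    have := sqr_ge0 zr; have := sqr_ge0 zi => h1 h2.
    have hzr : zr = 0 by apply/eqP; rewrite -sqrf_eq0; apply/eqP; nra.
    have hzi : zi = 0 by apply/eqP; rewrite -sqrf_eq0; apply/eqP; nra.
    by rewrite sqmE !cE hzr hzi rz; split; ring.
  have rsq : r ^+ 2 = zr ^+ 2 + zi ^+ 2 by rewrite sqr_sqrtr // addr_ge0 // sqr_ge0.
  rewrite sqmE !cE; split.
  - by apply: (@mulIf _ (r ^+ 2)); [rewrite expf_neq0 | rewrite mul1r {2}rsq; field].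
  - by apply: (@mulIf _ r) => //; rewrite -expr2 rsq; field.
  - by field.
pose w := fun j => u j - lam * v j.
have Ew := expand u v lam hu hv.
rewrite -/zr -/zi nu nv' L1 L2 in Ew.
have hw : pw_l2 w by rewrite /pw_l2 -/w Ew ltry.
have Nw : nrm w = 2 - 2 * r by apply: nrm_of => //; rewrite Ew; congr (_%:E); ring.
have Ew2 : w = (fun j => (- lam) * v j + u j) by apply: funext => j; rewrite /w mulNr addrC.
have Pr : ipr w u = 1 - r.
  rewrite ipr_sym Ew2 ipr_lin // ipr_self nu (ipr_sym _ u v) (ipi_sym _ _ _ hu hv) -/zr -/zi !cE.
  by move: L2; lra.
have Pi : ipi w u = 0.
  rewrite ipi_sym // Ew2 ipi_lin // ipi_self (ipr_sym _ u v) (ipi_sym _ _ _ hu hv) -/zr -/zi !cE.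
  by move: L3; lra.
have Hu : hh w u = (fun j => lam * v j).
  have [N0|Nnz] := eqVneq (nrm w) 0.
    rewrite hh_id0 //; apply: funext => j.
    have hw0 : pw_sqnorm w = 0%E by rewrite (sqnormE _ hw) N0.
    have := congr1 (fun F => F j) (sqnorm0 hw0) => /= /eqP.
    by rewrite subr_eq0 => /eqP.
  have hc1 : hc w u = 1.
    apply: cplx_ext; rewrite /hc /hk Pr Pi Nw !cE ?mulr0 //.
    have : 2 - 2 * r != 0 by rewrite -Nw.
    by move=> h; field.
  by apply: funext => j; rewrite /hh hc1 mul1r /w opprB addrC subrK.
pose W := fun f : I -> C => fun j => cj lam * hh w (fun j => f (g j)) j.
exists W; split.
- have Hph : pw_sqmod (cj lam) = 1 by rewrite sqmE /cj !cE sqrrN -sqmE.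
  have H := comp_unitary (comp_unitary hT (hh_unitary _ hw)) (phase_unitary J _ Hph).
  exact H.
- rewrite /W -/u Hu; apply: funext => j; rewrite mulrA.
  rewrite (_ : cj lam * lam = 1) ?mul1r //.
  by apply: cplx_ext; move: L1; rewrite sqmE /cj !cE => h; [rewrite -h; ring | ring].
Qed.

End WCons.

Section Pow.
Context {R : realType}.
Local Notation C := (R[i]).

Definition zpow (T : countType) (V Vi : (T -> C) -> (T -> C)) (n : int) : (T -> C) -> (T -> C) :=
  match n with Posz k => iter k V | Negz k => iter k.+1 Vi end.
Arguments zpow {T}.

Lemma iter_l2 (T : countType) (V : (T -> C) -> (T -> C)) k f :
  (forall g, pw_l2 g -> pw_l2 (V g)) -> pw_l2 f -> pw_l2 (iter k V f).
Proof. by move=> h hf; elim: k => [|k IH] //=; apply: h. Qed.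

Lemma iter_cancel (T : countType) (A B : (T -> C) -> (T -> C)) k f :
  (forall g, pw_l2 g -> A (B g) = g) -> (forall g, pw_l2 g -> pw_l2 (B g)) ->
  pw_l2 f -> iter k A (iter k B f) = f.
Proof.
move=> AB hB hf; elim: k => [|k IH] //.
by rewrite iterSr iterS AB ?IH //; apply: iter_l2.
Qed.

Section ZP.
Context {T : countType} {V Vi : (T -> C) -> (T -> C)}.
Hypotheses (hV : pw_unitary V) (hVi : pw_unitary Vi)
  (VK : forall f, pw_l2 f -> Vi (V f) = f) (ViK : forall f, pw_l2 f -> V (Vi f) = f).

Lemma zpow_unitary n : pw_unitary (zpow V Vi n).
Proof. by case: n => k /=; apply: iter_unitary. Qed.

Lemma zpow_l2 n f : pw_l2 f -> pw_l2 (zpow V Vi n f).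
Proof. exact: (u_l2 (zpow_unitary n)). Qed.

Lemma zpow_negS k f : zpow V Vi (Negz k + 1) f = iter k Vi f.
Proof.
case: k => [|k] //.
by rewrite (_ : Negz k.+1 + 1 = Negz k) //; rewrite !NegzE; lia.
Qed.

Lemma zpowL1 t f : pw_l2 f -> zpow V Vi (t + 1) f = V (zpow V Vi t f).
Proof.
move=> hf; case: t => k.
  by rewrite (_ : Posz k + 1 = Posz k.+1) ?iterS //; lia.
rewrite zpow_negS /= ?iterS ViK //; apply: iter_l2 => //; by move=> g; apply: (u_l2 hVi).
Qed.

Lemma zpowL2 t f : pw_l2 f -> zpow V Vi (t + 1) f = zpow V Vi t (V f).
Proof.
move=> hf; case: t => k.
  rewrite (_ : Posz k + 1 = Posz k.+1); last by lia.
  by rewrite /= -iterS iterSr.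
by rewrite zpow_negS /= -iterS iterSr VK.
Qed.

Lemma zpowK t f : pw_l2 f -> zpow Vi V t (zpow V Vi t f) = f.
Proof.
move=> hf; case: t => k; rewrite /zpow; apply: iter_cancel => //.
- by move=> g; apply: (u_l2 hV).
- by move=> g; apply: (u_l2 hVi).
Qed.

End ZP.
End Pow.
Arguments zpow {R T}.

Section Tensor.
Context {R : realType}.
Local Notation C := (R[i]).

Lemma esum_single_le (T : choiceType) (a : T -> \bar R) x :
  (forall y, (0 <= a y)%E) -> (a x <= \esum_(y in [set: T]) a y)%E.
Proof.
move=> h0; apply: esum_ge; exists [set x]%classic; first by split => //; exact: finite_set1.
by rewrite fsbig_set1.
Qed.

Definition slice {T : countType} (F : int * T -> C) (t : int) : T -> C := fun i => F (t, i).

Lemma split_norm {T : countType} (F : int * T -> C) :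
  pw_sqnorm F = (\esum_(t in [set: int]) pw_sqnorm (slice F t))%E.
Proof.
rewrite /pw_sqnorm /slice esum_esum; last by move=> *; rewrite lee_fin sqm_ge0.
rewrite (_ : ([set: int] `*`` (fun _ => [set: T]))%classic = [set: int * T]%classic).
  by apply: eq_esum => -[t i].
by apply/seteqP; split.
Qed.

Lemma slice_l2 {T : countType} {F : int * T -> C} t : pw_l2 F -> pw_l2 (slice F t).
Proof.
rewrite /pw_l2 split_norm; apply: le_lt_trans.
apply: (@esum_single_le _ (fun t => pw_sqnorm (slice F t))) => y.
by apply: esum_ge0 => *; rewrite lee_fin sqm_ge0.
Qed.

Section TS.
Context {I J : countType} (A : int -> (I -> C) -> (J -> C)).
Hypothesis hA : forall t, pw_unitary (A t).

Definition tens (F : int * I -> C) : int * J -> C := fun p => A p.1 (slice F p.1) p.2.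

Lemma tens_norm F : pw_l2 F -> pw_sqnorm (tens F) = pw_sqnorm F.
Proof.
move=> hF; rewrite !split_norm; apply: eq_esum => t _.
rewrite -(u_norm (hA t) (slice_l2 t hF)); by [].
Qed.

Lemma tens_unitary : pw_unitary tens.
Proof.
split.
- by move=> F hF; rewrite /pw_l2 tens_norm.
- move=> a F G hF hG; apply: funext => -[t j] /=.
  rewrite /tens /=.
  have := u_lin (hA t) a (slice_l2 t hF) (slice_l2 t hG) => /(congr1 (fun H => H j)).
  by [].
- exact: tens_norm.
- move=> G hG; pose F := fun p : int * I => uinv (A p.1) (slice G p.1) p.2.
  have e : forall t, slice F t = uinv (A t) (slice G t) by [].
  exists F.
    rewrite /pw_l2 split_norm; under eq_esum => t _ do rewrite e.
    under eq_esum => t _ do rewrite (u_norm (uinv_unitary (hA t)) (slice_l2 t hG)).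
    by rewrite -split_norm.
  apply: funext => -[t j]; rewrite /tens /= e.
  by rewrite (proj2 (uinv_spec (hA t) (slice_l2 t hG))).
Qed.

End TS.
End Tensor.
Arguments slice_l2 {R T F}.
Arguments split_norm {R T}.
Arguments tens_unitary {R I J A}.
Arguments slice {R T}.
Arguments tens {R I J}.


Section Final.
Context {R : realType}.
Local Notation C := (R[i]).

Lemma slice_ket {T : countType} t (phi : T -> C) s :
  slice (pw_ket t phi) s = if s == t then phi else (fun=> 0).
Proof. by rewrite /slice /pw_ket /=; case: (s == t). Qed.

Lemma ket_norm {T : countType} t (phi : T -> C) :
  pw_sqnorm (pw_ket t phi) = pw_sqnorm phi.
Proof.
rewrite split_norm.
rewrite (@eq_esum _ _ _ _ (fun s => if s \in [set t]%classic then pw_sqnorm phi else 0%E)).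
  rewrite -esum_mkcond esum_set1 //.
  by apply: esum_ge0 => *; rewrite lee_fin sqm_ge0.
move=> s _; rewrite slice_ket; have [->|ne] := eqVneq s t.
  by rewrite mem_set.
by rewrite memNset ?sqnorm_0 // => /= e; move: ne; rewrite e eqxx.
Qed.

Lemma ket_l2 {T : countType} t (phi : T -> C) : pw_l2 phi -> pw_l2 (pw_ket t phi).
Proof. by rewrite /pw_l2 ket_norm. Qed.

Lemma tens_ket {I J : countType} (A : int -> (I -> C) -> (J -> C)) :
  (forall t, pw_unitary (A t)) ->
  forall t phi, tens A (pw_ket t phi) = pw_ket t (A t phi).
Proof.
move=> hA t phi; apply: funext => -[s j]; rewrite /tens /= slice_ket /pw_ket /=.
by case: eqP => [->|_] //; rewrite (u_0 (hA s)).
Qed.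

Lemma shift_ket {T : countType} (Ur : (T -> C) -> (T -> C)) :
  pw_unitary Ur -> forall t phi,
  pw_shift_tensor Ur (pw_ket t phi) = pw_ket (t + 1) (Ur phi).
Proof.
move=> hU t phi; apply: funext => -[s i]; rewrite /pw_shift_tensor /pw_ket /=.
have [e|ne] := eqVneq s (t + 1).
  by rewrite e addrK eqxx.
rewrite (_ : (s - 1 == t) = false) /=; first by rewrite (u_0 hU).
by apply/negbTE; apply: contra ne => /eqP <-; rewrite subrK.
Qed.

Lemma shift_inj {T : countType} (Ur : (T -> C) -> (T -> C)) :
  pw_unitary Ur -> forall F G, pw_l2 F -> pw_l2 G ->
  pw_shift_tensor Ur F = pw_shift_tensor Ur G -> F = G.
Proof.
move=> hU F G hF hG e.
have E : forall t, slice F t = slice G t.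
  move=> t; apply: (u_inj hU (slice_l2 t hF) (slice_l2 t hG)); apply: funext => j.
  have := congr1 (fun H => H (t + 1, j)) e; rewrite /pw_shift_tensor /= addrK => h.
  exact: h.
by apply: funext => -[t i]; exact: (congr1 (fun h => h i) (E t)).
Qed.

Lemma int_ind2 (P : int -> Prop) : P 0 -> (forall t, P t -> P (t + 1)) ->
  (forall t, P t -> P (t - 1)) -> forall t, P t.
Proof.
move=> h0 hS hP; case=> n; elim: n => [|n IH] //.
- by rewrite (_ : Posz n.+1 = Posz n + 1); [exact: hS | lia].
- by rewrite (_ : Negz 0 = 0 - 1); [exact: hP | by []].
- by rewrite (_ : Negz n.+1 = Negz n - 1); [exact: hP | rewrite !NegzE; lia].
Qed.

Lemma orbit_form {T : countType} (Ur : (T -> C) -> (T -> C)) psi Psi :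
  pw_unitary Ur -> pw_l2 psi ->
  pw_orbit (pw_shift_tensor Ur) (pw_ket 0 psi) Psi ->
  forall t, Psi t = pw_ket t (zpow Ur (uinv Ur) t psi).
Proof.
move=> hU hpsi; case=> O0 OS.
have hUi := uinv_unitary hU.
have ViK : forall f, pw_l2 f -> Ur (uinv Ur f) = f.
  by move=> f hf; case: (uinv_spec hU hf).
have up : forall t, pw_shift_tensor Ur (pw_ket t (zpow Ur (uinv Ur) t psi)) =
    pw_ket (t + 1) (zpow Ur (uinv Ur) (t + 1) psi).
  by move=> t; rewrite shift_ket // (zpowL1 hUi ViK).
elim/int_ind2 => [|t IH|t IH] //.
- by rewrite (proj2 (OS t)) IH up.
- have h := proj2 (OS (t - 1)); rewrite subrK IH in h.
  have h2 := up (t - 1); rewrite subrK in h2; rewrite -h2 in h.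
  apply: esym.
  pose proof (shift_inj _ hU _ _ (ket_l2 (t-1) _ (zpow_l2 hU hUi (t-1) psi hpsi)) (proj1 (OS (t - 1))) h) as HH.
  exact HH.
Qed.

End Final.

Theorem theorem3 (R : realType) (I J : countType)
    (Ur : (I -> R[i]) -> (I -> R[i])) (Ur' : (J -> R[i]) -> (J -> R[i]))
    (psi0 : I -> R[i]) (psi0' : J -> R[i])
    (Psi : int -> int * I -> R[i]) (Psi' : int -> int * J -> R[i]) :
  (exists e : I -> J, bijective e) ->
  pw_unitary Ur -> pw_unitary Ur' ->
  pw_l2 psi0 -> pw_sqnorm psi0 = 1%E ->
  pw_l2 psi0' -> pw_sqnorm psi0' = 1%E ->
  pw_orbit (pw_shift_tensor Ur) (pw_ket 0 psi0) Psi ->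
  pw_orbit (pw_shift_tensor Ur') (pw_ket 0 psi0') Psi' ->
  exists S : (int * I -> R[i]) -> (int * J -> R[i]),
    [/\ pw_unitary S,
        forall tau : int, Psi' tau = S (Psi tau)
      & forall F, pw_l2 F -> S (pw_shift_tensor Ur F) = pw_shift_tensor Ur' (S F)].
Proof.
move=> hbij hU hU' hpsi npsi hpsi' npsi' hO hO'.
have [W [hW Wpsi]] := exists_W I J psi0 psi0' hbij hpsi npsi hpsi' npsi'.
have hUi := uinv_unitary hU; have hUi' := uinv_unitary hU'.
have VK : forall f, pw_l2 f -> uinv Ur (Ur f) = f by move=> f hf; apply: (uinvK hU).
have ViK : forall f, pw_l2 f -> Ur (uinv Ur f) = f by move=> f hf; case: (uinv_spec hU hf).
have ViK' : forall f, pw_l2 f -> Ur' (uinv Ur' f) = f by move=> f hf; case: (uinv_spec hU' hf).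
pose A := fun t (f : I -> R[i]) => zpow Ur' (uinv Ur') t (W (zpow (uinv Ur) Ur t f)).
have hA : forall t, pw_unitary (A t).
  move=> t.
  exact: (comp_unitary (comp_unitary (zpow_unitary hUi hU t) hW) (zpow_unitary hU' hUi' t)).
have KA : forall s f, pw_l2 f -> A (s + 1) (Ur f) = Ur' (A s f).
  move=> s f hf; rewrite /A (zpowL2 ViK); last exact: (u_l2 hU hf).
  rewrite VK //.
  rewrite (zpowL1 hUi' ViK') //; apply: (u_l2 hW); exact: (zpow_l2 hUi hU _ _ hf).
exists (tens A).
split.
- exact: tens_unitary.
- move=> tau; rewrite (orbit_form _ _ _ hU hpsi hO) (orbit_form _ _ _ hU' hpsi' hO') (tens_ket _ hA).
  by rewrite /A (zpowK hU hUi VK ViK) // Wpsi.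
- move=> F hF; apply: funext => -[t j]; rewrite /tens /pw_shift_tensor /=.
  have := congr1 (fun H => H j) (KA (t - 1) _ (slice_l2 (t - 1) hF)).
  by rewrite subrK => h; exact: h.
Qed.
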